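(* Let $(X_i,W_i,Y_i)$, $i=1,\dots,n$, be independently distributed observations from a regression discontinuity design with cutoff $c$, as described in the context. Assume: (A1) $\mu_0(x)$ and $\mu_1(x)$ are continuous at every $x$; (A2) $p(x)$ is continuous at every $x\neq c$; at the cutoff the right and left limits of $p$ exist and are finite, and $\lim_{x\to c^+}p(x)=p(c)\neq\lim_{x\to c^-}p(x)$; (A3) the function $C(x)=\mathbb{E}[(\epsilon_i(1)-\epsilon_i(0))\epsilon_i\mid X_i=x]$ is continuous at every $x\neq c$; at the cutoff its right and left limits exist and are finite, and $\lim_{x\to c^+}C(x)=C(c)$. Then there exist a constant $\beta$ and a continuous function $f$ such that $$Y_i=\tau_c\,p(X_i)+\beta\,\mathbf{1}(X_i\ge c)+f(X_i)+\varepsilon_i,$$ where $\varepsilon_i$ is uncorrelated with $X_i$, has expectation $0$ and variance $\sigma_i^2$. In particular, in the sharp RDD (where $W_i=\mathbf{1}(X_i\ge c)$) this representation holds with $p(X_i)=\mathbf{1}(X_i\ge c)$ and $\beta=0$.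
   Context: Each unit $i$ has potential outcomes $(Y_i(0),Y_i(1))$, a received treatment $W_i\in\{0,1\}$, observed outcome $Y_i=Y_i(W_i)$, and a real-valued running variable $X_i$; $c$ is a fixed cutoff. Define $\mu_1(x)=\mathbb{E}[Y_i(1)\mid X_i=x]$, $\mu_0(x)=\mathbb{E}[Y_i(0)\mid X_i=x]$, $p(x)=\mathbb{E}[W_i\mid X_i=x]=\mathbb{P}(W_i=1\mid X_i=x)$ (the propensity score), and deviations $\epsilon_i(0)=Y_i(0)-\mu_0(X_i)$, $\epsilon_i(1)=Y_i(1)-\mu_1(X_i)$, $\epsilon_i=W_i-p(X_i)$. The average treatment effect at the cutoff is $\tau_c=\mu_1(c)-\mu_0(c)$. $X_i$ is not assumed independent of $(\epsilon_i(0),\epsilon_i(1),\epsilon_i)$. The design is called sharp if $W_i=\mathbf{1}(X_i\ge c)$ and fuzzy otherwise. *)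

(* Defs.v *)
From HB Require Import structures.
From mathcomp Require Import all_boot all_order all_algebra.
From mathcomp Require Import all_classical all_reals all_analysis.
Set Implicit Arguments. Unset Strict Implicit. Unset Printing Implicit Defensive.
Import Order.TTheory GRing.Theory Num.Theory.
Import numFieldNormedType.Exports.
Local Open Scope classical_set_scope.
Local Open Scope ring_scope.

(* [m] is a (version of the) conditional expectation function
   x |-> E[Z | X = x]: m is Borel measurable, Z and m(X) are integrable,
   and E[Z 1_{X in B}] = E[m(X) 1_{X in B}] for every Borel set B. *)
Definition cond_exp_fun {d} {T : measurableType d} {R : realType}
    (P : probability T R) (X Z : T -> R) (m : R -> R) : Prop :=
  measurable_fun setT m /\
  P.-integrable setT (EFin \o Z) /\
  P.-integrable setT (EFin \o (m \o X)) /\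
  forall B : set R, measurable B ->
    (\int[P]_(w in X @^-1` B) (Z w)%:E =
     \int[P]_(w in X @^-1` B) (m (X w))%:E)%E.

(* Mutual independence of the random vectors (X_i, W_i, Y_i(0), Y_i(1)),
   i < n, expressed through the product rule on measurable rectangles
   (a pi-system generating the product sigma-algebra); taking a factor
   equal to [setT] recovers the rule for any subfamily. *)
Definition indep_units {d} {T : measurableType d} {R : realType}
    (P : probability T R) (n : nat) (X W Y0 Y1 : 'I_n -> T -> R) : Prop :=
  forall A B D E : 'I_n -> set R,
    (forall i, measurable (A i) /\ measurable (B i) /\
               measurable (D i) /\ measurable (E i)) ->
    P (\bigcap_(i in [set: 'I_n])
         [set w | A i (X i w) /\ B i (W i w) /\ D i (Y0 i w) /\ E i (Y1 i w)])
    = (\prod_(i < n)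
         P [set w | A i (X i w) /\ B i (W i w) /\ D i (Y0 i w) /\ E i (Y1 i w)])%E.

Definition obsY {T} {R : realType} (W Y0 Y1 : T -> R) : T -> R :=
  fun w => if W w == 1 then Y1 w else Y0 w.

Definition good_error {d} {T : measurableType d} {R : realType}
    (P : probability T R) (Xi epsi : T -> R) : Prop :=
  epsi \in Lfun P 2%:E /\
  ('E_P[epsi] = 0)%E /\
  covariance P epsi Xi = 0%E /\
  exists sigma2 : R, ('V_P[epsi] = sigma2%:E)%E.

(* Main.v *)
Require Import Defs.
From HB Require Import structures.
From mathcomp Require Import all_boot all_order all_algebra.
From mathcomp Require Import all_classical all_reals all_analysis.
From mathcomp Require Import measurable_realfun.
From mathcomp Require Import lra ring.
Import Order.TTheory GRing.Theory Num.Theory.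
Import numFieldNormedType.Exports.
Local Open Scope classical_set_scope.
Local Open Scope ring_scope.

Lemma Lfun_meas {d} {T : measurableType d} {R : realType}
  {P : probability T R} {p} {f : T -> R} :
  f \in Lfun P p -> measurable_fun setT f.
Proof. by rewrite inE => /andP[/[!inE] mf _]. Qed.

Lemma cond_ind {d} {T : measurableType d} {R : realType}
  (P : probability T R) (X Z : T -> R) (m : R -> R) (A : set R) :
  cond_exp_fun P X Z m -> measurable_fun setT X -> measurable A ->
  (\int[P]_w (Z w * \1_A (X w))%:E = \int[P]_w (m (X w) * \1_A (X w))%:E)%E.
Proof.
move=> [_ [_ [_ H]]] mX mA.
have mXA : measurable (X @^-1` A) by rewrite -[X @^-1` A]setTI; exact: mX.
have := H A mA.
rewrite (integral_mkcond _ (fun w => (Z w)%:E)) (integral_mkcond _ (fun w => (m (X w))%:E)).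
move=> E.
transitivity (\int[P]_x ((fun w => (Z w)%:E) \_ (X @^-1` A)) x)%E.
  apply: eq_integral => w _; rewrite /patch indicE.
  have -> : (w \in X @^-1` A) = (X w \in A) by apply/idP/idP; rewrite !inE.
  by case: (X w \in A); rewrite ?mulr1 ?mulr0.
rewrite E; apply: eq_integral => w _; rewrite /patch indicE.
have -> : (w \in X @^-1` A) = (X w \in A) by apply/idP/idP; rewrite !inE.
by case: (X w \in A); rewrite ?mulr1 ?mulr0.
Qed.


Lemma int_meas {d} {T : measurableType d} {R : realType} (P : probability T R)
  (f : T -> R) : P.-integrable setT (EFin \o f) -> measurable_fun setT f.
Proof. by move=> /(measurable_int P) /measurable_EFinP. Qed.

Lemma int_le {d} {T : measurableType d} {R : realType} (P : probability T R)
  (f g : T -> R) : measurable_fun setT f -> (forall w, `|f w| <= `|g w|) ->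
  P.-integrable setT (EFin \o g) -> P.-integrable setT (EFin \o f).
Proof.
move=> mf fg gi; apply: (le_integrable measurableT) gi.
  exact/measurable_EFinP.
by move=> w _ /=; rewrite lee_fin.
Qed.

Lemma intD {d} {T : measurableType d} {R : realType} (P : probability T R)
  (f g : T -> R) : P.-integrable setT (EFin \o f) -> P.-integrable setT (EFin \o g) ->
  (\int[P]_w (f w + g w)%:E = \int[P]_w (f w)%:E + \int[P]_w (g w)%:E)%E.
Proof.
move=> fi gi; rewrite -(integralD_EFin measurableT fi gi).
by apply: eq_integral => w _.
Qed.

Lemma intB {d} {T : measurableType d} {R : realType} (P : probability T R)
  (f g : T -> R) : P.-integrable setT (EFin \o f) -> P.-integrable setT (EFin \o g) ->
  (\int[P]_w (f w - g w)%:E = \int[P]_w (f w)%:E - \int[P]_w (g w)%:E)%E.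
Proof.
move=> fi gi; rewrite -(integralB_EFin measurableT fi gi).
by apply: eq_integral => w _.
Qed.

Lemma intZ {d} {T : measurableType d} {R : realType} (P : probability T R)
  (f : T -> R) (k : R) : P.-integrable setT (EFin \o f) ->
  (\int[P]_w (k * f w)%:E = k%:E * \int[P]_w (f w)%:E)%E.
Proof.
move=> fi; rewrite -(integralZl measurableT fi).
by apply: eq_integral => w _; rewrite EFinM.
Qed.

Lemma integD {d} {T : measurableType d} {R : realType} (P : probability T R)
  (f g : T -> R) : P.-integrable setT (EFin \o f) -> P.-integrable setT (EFin \o g) ->
  P.-integrable setT (EFin \o (fun w => f w + g w)).
Proof.
move=> fi gi; have := integrableD measurableT fi gi.
by apply: (eq_integrable measurableT) => w _.
Qed.

Lemma integB {d} {T : measurableType d} {R : realType} (P : probability T R)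
  (f g : T -> R) : P.-integrable setT (EFin \o f) -> P.-integrable setT (EFin \o g) ->
  P.-integrable setT (EFin \o (fun w => f w - g w)).
Proof.
move=> fi gi; have := integrableB measurableT fi gi.
by apply: (eq_integrable measurableT) => w _.
Qed.

Lemma integZ {d} {T : measurableType d} {R : realType} (P : probability T R)
  (f : T -> R) (k : R) : P.-integrable setT (EFin \o f) ->
  P.-integrable setT (EFin \o (fun w => k * f w)).
Proof.
move=> fi; have := integrableZl measurableT k fi.
by apply: (eq_integrable measurableT) => w _ /=; rewrite EFinM.
Qed.

Arguments int_meas {d T R P f}.
Arguments int_le {d T R P f g}.
Arguments intD {d T R P f g}.
Arguments intB {d T R P f g}.
Arguments intZ {d T R P f} k.
Arguments integD {d T R P f g}.
Arguments integB {d T R P f g}.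
Arguments integZ {d T R P f} k.

Definition PO {d} {T : measurableType d} {R : realType} (P : probability T R)
  (X Z : T -> R) (m h : R -> R) : Prop :=
  P.-integrable setT (EFin \o (fun w => Z w * h (X w))) /\
  P.-integrable setT (EFin \o (fun w => m (X w) * h (X w))) /\
  (\int[P]_w (Z w * h (X w))%:E = \int[P]_w (m (X w) * h (X w))%:E)%E.

Lemma PO_ext {d} {T : measurableType d} {R : realType} (P : probability T R)
  (X Z : T -> R) (m h1 h2 : R -> R) : h1 =1 h2 -> PO P X Z m h1 -> PO P X Z m h2.
Proof.
move=> e [i1 [i2 E]]; split; [|split].
- by apply: (eq_integrable measurableT) i1 => w _ /=; rewrite e.
- by apply: (eq_integrable measurableT) i2 => w _ /=; rewrite e.
- transitivity (\int[P]_w (Z w * h1 (X w))%:E)%E.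
    by apply: eq_integral => w _; rewrite e.
  rewrite E; apply: eq_integral => w _; rewrite e //.
Qed.

Arguments PO_ext {d T R P X Z m h1 h2}.

Lemma PO_add {d} {T : measurableType d} {R : realType} (P : probability T R)
  (X Z : T -> R) (m h1 h2 : R -> R) : PO P X Z m h1 -> PO P X Z m h2 ->
  PO P X Z m (fun x => h1 x + h2 x).
Proof.
move=> [i1 [i2 E]] [j1 [j2 F]]; split; [|split].
- have := integD i1 j1; apply: (eq_integrable measurableT) => w _ /=.
  by rewrite mulrDr.
- have := integD i2 j2; apply: (eq_integrable measurableT) => w _ /=.
  by rewrite mulrDr.
- transitivity (\int[P]_w (Z w * h1 (X w) + Z w * h2 (X w))%:E)%E.
    by apply: eq_integral => w _; rewrite mulrDr.
  rewrite intD // E F -intD //.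
  by apply: eq_integral => w _; rewrite mulrDr.
Qed.

Arguments PO_add {d T R P X Z m h1 h2}.

Lemma PO_scale {d} {T : measurableType d} {R : realType} (P : probability T R)
  (X Z : T -> R) (m h : R -> R) (k : R) : PO P X Z m h ->
  PO P X Z m (fun x => k * h x).
Proof.
move=> [i1 [i2 E]]; split; [|split].
- have := integZ k i1; apply: (eq_integrable measurableT) => w _ /=.
  by rewrite mulrCA.
- have := integZ k i2; apply: (eq_integrable measurableT) => w _ /=.
  by rewrite mulrCA.
- transitivity (\int[P]_w (k * (Z w * h (X w)))%:E)%E.
    by apply: eq_integral => w _; rewrite mulrCA.
  rewrite intZ // E -intZ //.
  by apply: eq_integral => w _; rewrite mulrCA.
Qed.

Arguments PO_scale {d T R P X Z m h} k.

Lemma PO_0 {d} {T : measurableType d} {R : realType} (P : probability T R)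
  (X Z : T -> R) (m : R -> R) : PO P X Z m (fun _ => 0).
Proof.
have i0 : P.-integrable setT (EFin \o (fun _ : T => (0:R))).
  by apply: (eq_integrable measurableT) (integrable0 P setT) => w _.
split; [|split].
- by apply: (eq_integrable measurableT) i0 => w _ /=; rewrite mulr0.
- by apply: (eq_integrable measurableT) i0 => w _ /=; rewrite mulr0.
- by apply: eq_integral => w _; rewrite !mulr0.
Qed.

Lemma PO_ind {d} {T : measurableType d} {R : realType} (P : probability T R)
  (X Z : T -> R) (m : R -> R) (A : set R) :
  cond_exp_fun P X Z m -> measurable_fun setT X -> measurable A ->
  PO P X Z m (\1_A).
Proof.
move=> H mX mA; have [mm [Zi [mi _]]] := H.
have mI : measurable_fun setT (fun w => (\1_A (X w) : R)).
  exact: (measurableT_comp (measurable_indic mA) mX).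
split; [|split].
- apply: (int_le _ _ Zi).
    by apply: measurable_funM => //; exact: int_meas Zi.
  by move=> w; rewrite indicE; case: (_ \in _); rewrite ?mulr1 ?mulr0 ?normr0.
- apply: (int_le _ _ mi).
    by apply: measurable_funM => //; exact: int_meas mi.
  by move=> w; rewrite indicE; case: (_ \in _); rewrite ?mulr1 ?mulr0 ?normr0.
- exact: cond_ind.
Qed.
Arguments PO_ind {d T R P X Z m A}.


Lemma PO_sum {d} {T : measurableType d} {R : realType} (P : probability T R)
  (X Z : T -> R) (m : R -> R) (F : nat -> R -> R) (N : nat) :
  (forall k, PO P X Z m (F k)) ->
  PO P X Z m (fun x => \sum_(0 <= k < N) F k x).
Proof.
move=> HF; elim: N => [|N IH].
  by apply: (PO_ext _ (PO_0 P X Z m)) => x; rewrite big_geq.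
apply: (PO_ext _ (PO_add IH (HF N))) => x.
by rewrite big_nat_recr.
Qed.

Lemma meas_dyadic {R : realType} (h : R -> R) (n k : nat) :
  measurable_fun setT h ->
  measurable (dyadic_approx setT (EFin \o h) n k).
Proof.
move=> mh; have mf : measurable_fun setT (EFin \o h) by exact/measurable_EFinP.
rewrite /dyadic_approx; case: ifPn => [kn|_]//; rewrite -preimage_comp.
by apply: mf => //; apply/measurable_image_EFin; exact: measurable_itv.
Qed.

Lemma meas_integer {R : realType} (h : R -> R) (n : nat) :
  measurable_fun setT h ->
  measurable (integer_approx setT (EFin \o h) n).
Proof.
move=> mh; have mf : measurable_fun setT (EFin \o h) by exact/measurable_EFinP.
exact: emeasurable_fun_c_infty.
Qed.

Lemma PO_approx {d} {T : measurableType d} {R : realType} (P : probability T R)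
  (X Z : T -> R) (m h : R -> R) (n : nat) :
  cond_exp_fun P X Z m -> measurable_fun setT X -> measurable_fun setT h ->
  PO P X Z m (approx setT (EFin \o h) n).
Proof.
move=> H mX mh.
apply: (PO_ext (h1 := fun x => \sum_(0 <= k < n * 2 ^ n)
   (k%:R * 2 ^- n * \1_(dyadic_approx setT (EFin \o h) n k) x) +
   n%:R * \1_(integer_approx setT (EFin \o h) n) x)).
  by move=> x; rewrite /approx big_mkord.
apply: PO_add; last first.
  by apply: PO_scale; apply: PO_ind => //; exact: meas_integer.
apply: PO_sum => k; apply: PO_scale; apply: PO_ind => //.
exact: meas_dyadic.
Qed.

Lemma dct_R {d} {T : measurableType d} {R : realType} (P : probability T R)
  (F : nat -> T -> R) (f G : T -> R) :
  (forall n, measurable_fun setT (F n)) -> measurable_fun setT f ->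
  (forall w, F n w @[n --> \oo] --> f w) ->
  P.-integrable setT (EFin \o G) -> (forall n w, `|F n w| <= `|G w|) ->
  (\int[P]_w (F n w)%:E @[n --> \oo] --> \int[P]_w (f w)%:E)%E.
Proof.
move=> mF mf Ff Gi FG.
have := @dominated_convergence _ _ _ P setT measurableT (fun n => EFin \o F n)
  (EFin \o f) (abse \o (EFin \o G)).
case.
- by move=> n; exact/measurable_EFinP.
- exact/measurable_EFinP.
- apply: aeW => w _ /=.
  exact: (cvg_comp _ _ (Ff w)).
- exact: integrable_abse.
- by apply: aeW => w n _ /=; rewrite lee_fin.
by move=> _ _.
Qed.

Lemma approx_ge0 {R : realType} (h : R -> R) n x :
  0 <= approx setT (EFin \o h) n x.
Proof.
rewrite /approx; apply: addr_ge0; last by rewrite mulr_ge0 // indicE.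
by apply: sumr_ge0 => k _; rewrite !mulr_ge0 // indicE.
Qed.

Lemma PO_pos {d} {T : measurableType d} {R : realType} (P : probability T R)
  (X Z : T -> R) (m h : R -> R) :
  cond_exp_fun P X Z m -> measurable_fun setT X -> measurable_fun setT h ->
  (forall x, 0 <= h x) ->
  P.-integrable setT (EFin \o (fun w => Z w * h (X w))) ->
  P.-integrable setT (EFin \o (fun w => m (X w) * h (X w))) ->
  PO P X Z m h.
Proof.
move=> H mX mh h0 i1 i2; split; [by []|split; [by []|]].
pose a := approx setT (EFin \o h).
have ah n x : a n x <= h x.
  by have := @le_approx _ _ _ setT (EFin \o h) n x (fun x _ => h0 x) I; rewrite lee_fin.
have acv x : a n x @[n --> \oo] --> h x.
  exact: (@cvg_approx _ _ _ setT (EFin \o h) x (fun x _ => h0 x) I (ltry _)).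
have PA n := PO_approx P X Z m h n H mX mh.
have c1 := @dct_R _ _ _ P (fun n w => Z w * a n (X w)) (fun w => Z w * h (X w))
   (fun w => Z w * h (X w)).
have c2 := @dct_R _ _ _ P (fun n w => m (X w) * a n (X w)) (fun w => m (X w) * h (X w))
   (fun w => m (X w) * h (X w)).
have {c1}c1 := c1 (fun n => int_meas (PA n).1) (int_meas i1).
have {c2}c2 := c2 (fun n => int_meas (PA n).2.1) (int_meas i2).
have {c1}c1 := c1 (fun w => cvgMr (acv (X w))) i1.
have {c2}c2 := c2 (fun w => cvgMr (acv (X w))) i2.
have bnd (u : R) n w : `|u * a n (X w)| <= `|u * h (X w)|.
  rewrite !normrM ler_wpM2l // (ger0_norm (approx_ge0 _ _ _)) ger0_norm //.
have {c1}c1 := c1 _ (fun n w => bnd (Z w) n w).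
have {c2}c2 := c2 _ (fun n w => bnd (m (X w)) n w).
have e : (fun n => \int[P]_w (Z w * a n (X w))%:E)%E =
         (fun n => \int[P]_w (m (X w) * a n (X w))%:E)%E.
  by apply: funext => n; exact: (PA n).2.2.
rewrite e in c1.
have l1 := cvg_lim (@ereal_hausdorff R) (c1 _).
have l2 := cvg_lim (@ereal_hausdorff R) (c2 _).
by rewrite -l1 -l2.
Qed.

Lemma norm_maxr0 {R : realType} (x : R) : `|Num.max x 0| <= `|x|.
Proof.
rewrite maxEle; case: ifPn => // x0.
by rewrite normr0.
Qed.

Lemma maxr_split {R : realType} (y : R) :
  Num.max y 0 + (-1) * Num.max (- y) 0 = y.
Proof.
rewrite !maxEle; case: ifPn => h1; case: ifPn => h2; rewrite -?ltNge in h1 h2; lra.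
Qed.

Lemma PO_gen {d} {T : measurableType d} {R : realType} (P : probability T R)
  (X Z : T -> R) (m h : R -> R) :
  cond_exp_fun P X Z m -> measurable_fun setT X -> measurable_fun setT h ->
  P.-integrable setT (EFin \o (fun w => Z w * h (X w))) ->
  P.-integrable setT (EFin \o (fun w => m (X w) * h (X w))) ->
  PO P X Z m h.
Proof.
move=> H mX mh i1 i2.
have [_ [Zi [mi _]]] := H.
have mZ := int_meas Zi; have mmX := int_meas mi.
pose hp x := Num.max (h x) 0; pose hn x := Num.max (- h x) 0.
have mhp : measurable_fun setT hp by apply: measurable_maxr.
have mhn : measurable_fun setT hn.
  by apply: measurable_maxr => //; apply: measurableT_comp.
have bp (u : R) x : `|u * hp x| <= `|u * h x|.
  by rewrite !normrM ler_wpM2l // norm_maxr0.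
have bn (u : R) x : `|u * hn x| <= `|u * h x|.
  by rewrite !normrM ler_wpM2l // -(normrN (h x)) norm_maxr0.
have Pp : PO P X Z m hp.
  apply: PO_pos => //; first by move=> x; rewrite le_max lexx orbT.
  - apply: (int_le _ _ i1); last by move=> w; exact: bp.
    by apply: measurable_funM => //; apply: measurableT_comp.
  - apply: (int_le _ _ i2); last by move=> w; exact: bp.
    by apply: measurable_funM => //; apply: measurableT_comp.
have Pn : PO P X Z m hn.
  apply: PO_pos => //; first by move=> x; rewrite le_max lexx orbT.
  - apply: (int_le _ _ i1); last by move=> w; exact: bn.
    by apply: measurable_funM => //; apply: measurableT_comp.
  - apply: (int_le _ _ i2); last by move=> w; exact: bn.
    by apply: measurable_funM => //; apply: measurableT_comp.
apply: (PO_ext _ (PO_add Pp (PO_scale (-1) Pn))) => x.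
exact: maxr_split.
Qed.
Arguments PO_gen {d T R P X Z m h}.

Lemma L2_of_sq {d} {T : measurableType d} {R : realType} (P : probability T R)
  (f : T -> R) : measurable_fun setT f ->
  (\int[P]_w (f w ^+ 2)%:E < +oo)%E -> f \in Lfun P 2%:E.
Proof.
move=> mf fi; rewrite inE; apply/andP; split.
  by rewrite inE.
rewrite inE /= /finite_norm unlock /Lnorm.
apply: poweR_lty.
rewrite (eq_integral (fun x => (f x ^+ 2)%:E)) //.
move=> x _ /=; congr EFin; rewrite powR_mulrn //.
by rewrite real_normK // num_real.
Qed.

Lemma cond_L2 {d} {T : measurableType d} {R : realType} (P : probability T R)
  (X Z : T -> R) (m : R -> R) :
  cond_exp_fun P X Z m -> measurable_fun setT X -> Z \in Lfun P 2%:E ->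
  (fun w => m (X w)) \in Lfun P 2%:E.
Proof.
move=> Hc mX HZ.
have [mm [Zi [mi _]]] := Hc.
have mZ := int_meas Zi; have mmX := int_meas mi.
have Z2 := Lfun2_integrable_sqr HZ.
pose A (k : nat) := [set y | `|m y| <= k%:R].
have mA k : measurable (A k).
  have := (measurableT_comp (@normr_measurable R setT) mm) measurableT _
    (measurable_itv `]-oo, k%:R]).
  rewrite setTI; congr measurable; apply/seteqP; split => y /=;
    by rewrite in_itv /=.
pose g (k : nat) y := m y * \1_(A k) y.
have mg k : measurable_fun setT (g k).
  by apply: measurable_funM => //; exact: measurable_indic.
have gb k y : `|g k y| <= k%:R.
  rewrite /g indicE; case: (boolP (y \in A k)) => [/set_mem|_].
    by rewrite mulr1.
  by rewrite mulr0 normr0.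
have gm k y : m y * g k y = g k y ^+ 2.
  rewrite /g indicE; case: (boolP (y \in A k)) => _ /=; by rewrite ?mulr1n ?mulr0n ?mulr1 ?mulr0 expr2 ?mulr0.
have mgX k : measurable_fun setT (fun w => g k (X w)).
  exact: measurableT_comp (mg k) mX.
have bnd k (u : R) w : `|u * g k (X w)| <= `|k%:R * u|.
  rewrite normrM (normrM k%:R u) mulrC ler_wpM2r //.
  exact: le_trans (gb k (X w)) (ler_norm _).
have iZg k : P.-integrable setT (EFin \o (fun w => Z w * g k (X w))).
  apply: (int_le _ _ (integZ k%:R Zi)); last by move=> w; exact: bnd.
  exact: measurable_funM.
have img k : P.-integrable setT (EFin \o (fun w => m (X w) * g k (X w))).
  apply: (int_le _ _ (integZ k%:R mi)); last by move=> w; exact: bnd.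
  exact: measurable_funM.
have PO_k k := PO_gen Hc mX (mg k) (iZg k) (img k).
have ig2 k : P.-integrable setT (EFin \o (fun w => g k (X w) ^+ 2)).
  by apply: (eq_integrable measurableT) (img k) => w _ /=; rewrite gm.
have bZ : (\int[P]_w (Z w ^+ 2)%:E)%E \is a fin_num.
  exact: (integrable_fin_num measurableT Z2).
have key k : (\int[P]_w (g k (X w) ^+ 2)%:E <= \int[P]_w (Z w ^+ 2)%:E)%E.
  have e1 : (\int[P]_w (g k (X w) ^+ 2)%:E = \int[P]_w (Z w * g k (X w))%:E)%E.
    rewrite (PO_k k).2.2; apply: eq_integral => w _; by rewrite gm.
  have i2 : P.-integrable setT (EFin \o (fun w => 2 * (Z w * g k (X w)))).
    exact: integZ.
  have i3 : P.-integrable setT (EFin \o (fun w => Z w ^+ 2 + g k (X w) ^+ 2)).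
    exact: integD.
  have Hle : {in setT, forall w, ((EFin \o (fun w => (2 * (Z w * g k (X w)))%R)) w <=
      (EFin \o (fun w => (Z w ^+ 2 + g k (X w) ^+ 2)%R)) w)%E}.
    move=> w _ /=; rewrite lee_fin; set u := Z w; set v := g k (X w).
    have := sqr_ge0 (u - v); rewrite !expr2; lra.
  have := le_integral measurableT i2 i3 Hle.
  rewrite intZ // intD // -e1.
  have af := integrable_fin_num measurableT (ig2 k).
  move: af bZ.
  set a := (\int[P]_w _)%E; set b := (\int[P]_w _)%E.
  move=> af bf; rewrite -(fineK af) -(fineK bf) -EFinM -EFinD !lee_fin.
  lra.
pose gs k w := (g k (X w) ^+ 2)%:E.
have mgs k : measurable_fun setT (gs k).
  by apply/measurable_EFinP; exact: int_meas (ig2 k).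
have gs0 k w : setT w -> (0 <= gs k w)%E by move=> _; rewrite lee_fin sqr_ge0.
have nd w : setT w -> {homo gs^~ w : n n' / (n <= n')%N >-> (n <= n')%E}.
  move=> _ n n' nn'; rewrite /gs lee_fin /g indicE.
  case: (boolP (X w \in A n)) => Hn.
    have Hn' : X w \in A n'.
      move/set_mem: Hn => Hn; apply/mem_set; rewrite /A /= in Hn *; apply: (le_trans Hn); by rewrite ler_nat.
    by rewrite indicE Hn'.
  by rewrite /= mulr0 expr2 mulr0 sqr_ge0.
have mct := @cvg_monotone_convergence _ _ _ P setT measurableT gs mgs gs0 nd.
have lim_w w : limn (gs^~ w) = (m (X w) ^+ 2)%:E.
  apply: cvg_lim => //; apply: cvg_near_cst.
  exists (Num.Def.trunc `|m (X w)|).+1 => // n /= Hn.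
  rewrite /gs /g indicE mem_set /= ?mulr1 //.
  apply: le_trans (ltW (truncnS_gt _)) _; by rewrite ler_nat.
have eqi : (\int[P]_w (fun x => limn (gs^~ x)) w = \int[P]_w (m (X w) ^+ 2)%:E)%E.
  by apply: eq_integral => w _; rewrite lim_w.
have le2 : (\int[P]_w (m (X w) ^+ 2)%:E <= \int[P]_w (Z w ^+ 2)%:E)%E.
  rewrite -eqi -(cvg_lim _ mct) //; apply: lime_le.
    by apply/cvg_ex; eexists; exact: mct.
  by apply: nearW => n; exact: key.
apply: L2_of_sq => //.
apply: (le_lt_trans le2); by move/fin_numPlt: bZ => /andP[_ ->].
Qed.

Arguments cond_L2 {d T R P X Z m}.

Lemma L2_int {d} {T : measurableType d} {R : realType} (P : probability T R)
  (f g : T -> R) : f \in Lfun P 2%:E -> g \in Lfun P 2%:E ->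
  P.-integrable setT (EFin \o (fun w => f w * g w)).
Proof. by move=> hf hg; apply/Lfun1_integrable; exact: Lfun2_mul_Lfun1. Qed.

Lemma L2_L1 {d} {T : measurableType d} {R : realType} (P : probability T R)
  (f : T -> R) : f \in Lfun P 2%:E -> f \in Lfun P 1.
Proof. by move=> hf; apply: Lfun_subset12 => //; exact: fin_num_measure. Qed.

Arguments L2_int {d T R P f g}.
Arguments L2_L1 {d T R P f}.

Lemma cond_good {d} {T : measurableType d} {R : realType} (P : probability T R)
  (X Z : T -> R) (m : R -> R) :
  cond_exp_fun P X Z m -> X \in Lfun P 2%:E -> Z \in Lfun P 2%:E ->
  good_error P X (fun w => Z w - m (X w)).
Proof.
move=> Hc HX HZ.
have mX := Lfun_meas HX.
have HmX := cond_L2 Hc mX HZ.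
have [mm [Zi [mi Hi]]] := Hc.
have He : (fun w => Z w - m (X w)) \in Lfun P 2%:E.
  have p12 : (1 <= 2%:E :> \bar R)%E by rewrite lee1n.
  by have := rpredB HZ HmX; move=> /(_ p12).
have E0 : ('E_P[(fun w => Z w - m (X w))%R] = 0)%E.
  rewrite unlock intB //.
  have := Hi setT measurableT; rewrite preimage_setT => ->.
  by rewrite subee // (integrable_fin_num measurableT mi).
split => //; split => //; split; last first.
  exists (fine ('V_P[(fun w => Z w - m (X w))%R])).
  by rewrite fineK // variance_fin_num.
rewrite covarianceE; last 3 first.
- exact: L2_L1.
- exact: L2_L1.
- exact: Lfun2_mul_Lfun1.
rewrite E0 mul0e sube0.
have iZX := L2_int HZ HX.
have imX := L2_int HmX HX.
have PX := PO_gen (h := id) Hc mX (@measurable_id _ _ setT) iZX imX.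
rewrite unlock.
transitivity (\int[P]_w ((Z w * X w)%:E - (m (X w) * X w)%:E))%E.
  by apply: eq_integral => w _ /=; rewrite -EFinB mulrBl.
rewrite intB //; rewrite PX.2.2 subee //.
exact: (integrable_fin_num measurableT imX).
Qed.

Lemma ind_cont {R : realType} (c x : R) : x != c ->
  {for x, continuous (fun y => ((c <= y)%R)%:R : R)}.
Proof.
move=> xc; apply: cvg_near_cst.
have [xlt|xgt] := ltP x c.
  near=> y; have yc : y < c by near: y; exact: lt_nbhsl.
  by rewrite !lt_geF.
have cx : c < x by rewrite lt_neqAle eq_sym xc.
near=> y; have cy : c < y by near: y; exact: lt_nbhsr.
by rewrite !ltW.
Unshelve. all: by end_near. Qed.

Lemma cont_gen {R : realType} (mu0 mu1 p C : R -> R) (c pl pr Cl Cr : R) :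
  continuous mu0 -> continuous mu1 ->
  (forall x, x != c -> {for x, continuous p}) ->
  p x @[x --> c^'+] --> pr -> p x @[x --> c^'-] --> pl -> pr = p c ->
  (forall x, x != c -> {for x, continuous C}) ->
  C x @[x --> c^'+] --> Cr -> C x @[x --> c^'-] --> Cl -> Cr = C c ->
  continuous (fun x => mu0 x + p x * ((mu1 x - mu0 x) - (mu1 c - mu0 c)) +
                       (C x - (C c - Cl) * ((c <= x)%R)%:R)).
Proof.
move=> cm0 cm1 cp pR pL epr cC CR CL eCr x.
have [xc|xc] := eqVneq x c; last first.
  apply: cvgD; [apply: cvgD|apply: cvgB].
  - exact: cm0.
  - apply: cvgM; first exact: cp.
    apply: cvgB; last exact: cvg_cst.
    by apply: cvgB; [exact: cm1|exact: cm0].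
  - exact: cC.
  - apply: cvgM; first exact: cvg_cst.
    exact: ind_cont.
subst x; apply/left_right_continuousP; split.
- have -> : mu0 c + p c * (mu1 c - mu0 c - (mu1 c - mu0 c)) +
      (C c - (C c - Cl) * ((c <= c)%R)%:R) =
      mu0 c + pl * (mu1 c - mu0 c - (mu1 c - mu0 c)) + (Cl - (C c - Cl) * 0).
    by rewrite lexx mulr1; lra.
  apply: cvgD; [apply: cvgD|apply: cvgB].
  + exact: cvg_within_filter (cm0 c).
  + apply: cvgM; first exact: pL.
    apply: cvgB; last exact: cvg_cst.
    by apply: cvgB; [exact: cvg_within_filter (cm1 c)|exact: cvg_within_filter (cm0 c)].
  + exact: CL.
  + apply: cvgM; first exact: cvg_cst.
    apply: cvg_near_cst; near=> y.
    have yc : y < c by near: y; exact: nbhs_left_lt.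
    by rewrite lt_geF.
- have -> : mu0 c + p c * (mu1 c - mu0 c - (mu1 c - mu0 c)) +
      (C c - (C c - Cl) * ((c <= c)%R)%:R) =
      mu0 c + pr * (mu1 c - mu0 c - (mu1 c - mu0 c)) + (Cr - (C c - Cl) * 1).
    by rewrite lexx mulr1 eCr; lra.
  apply: cvgD; [apply: cvgD|apply: cvgB].
  + exact: cvg_within_filter (cm0 c).
  + apply: cvgM; first exact: pR.
    apply: cvgB; last exact: cvg_cst.
    by apply: cvgB; [exact: cvg_within_filter (cm1 c)|exact: cvg_within_filter (cm0 c)].
  + exact: CR.
  + apply: cvgM; first exact: cvg_cst.
    apply: cvg_near_cst; near=> y.
    have yc : c < y by near: y; exact: nbhs_right_gt.
    by rewrite ltW.
Unshelve. all: by end_near. Qed.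

Lemma L2_mulb {d} {T : measurableType d} {R : realType} (P : probability T R)
  (W f : T -> R) : measurable_fun setT W -> (forall w, `|W w| <= 1) ->
  f \in Lfun P 2%:E -> (fun w => W w * f w) \in Lfun P 2%:E.
Proof.
move=> mW W1 hf; have mf := Lfun_meas hf.
apply: L2_of_sq; first exact: measurable_funM.
have f2 := Lfun2_integrable_sqr hf.
apply: (@le_lt_trans _ _ (\int[P]_w (f w ^+ 2)%:E)%E).
  apply: ge0_le_integral => //.
  - by move=> w _; rewrite lee_fin sqr_ge0.
  - apply/measurable_EFinP; apply: measurable_funX; exact: measurable_funM.
  - by apply/measurable_EFinP; exact: measurable_funX.
  - move=> w _; rewrite lee_fin exprMn ler_piMl ?sqr_ge0 //.
    by rewrite -real_normK ?num_real // expr_le1.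
by move/fin_numPlt: (integrable_fin_num measurableT f2) => /andP[_ ->].
Qed.

Arguments L2_mulb {d T R P W f}.

Lemma W_L2 {d} {T : measurableType d} {R : realType} (P : probability T R)
  (W : T -> R) : measurable_fun setT W -> (forall w, W w = 0 \/ W w = 1) ->
  W \in Lfun P 2%:E.
Proof.
move=> mW W01.
have W1 w : `|W w| <= 1 by case: (W01 w) => ->; rewrite ?normr0 ?normr1.
have := L2_mulb mW W1 (Lfun_cst P 1 2).
have -> : (fun w => W w * cst 1 w) = W by apply: funext => w /=; rewrite mulr1.
by [].
Qed.
Arguments W_L2 {d T R} P {W}.


Lemma obsY_eq {T} {R : realType} (W Y0 Y1 : T -> R) w :
  (W w = 0 \/ W w = 1) -> obsY W Y0 Y1 w = Y0 w + W w * (Y1 w - Y0 w).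
Proof.
rewrite /obsY; case=> ->.
  by rewrite eq_sym oner_eq0 mul0r addr0.
by rewrite eqxx mul1r addrC subrK.
Qed.

Lemma obsY_L2 {d} {T : measurableType d} {R : realType} (P : probability T R)
  (W Y0 Y1 : T -> R) : measurable_fun setT W -> (forall w, W w = 0 \/ W w = 1) ->
  Y0 \in Lfun P 2%:E -> Y1 \in Lfun P 2%:E -> obsY W Y0 Y1 \in Lfun P 2%:E.
Proof.
move=> mW W01 h0 h1.
have W1 w : `|W w| <= 1 by case: (W01 w) => ->; rewrite ?normr0 ?normr1.
have p12 : (1 <= 2%:E :> \bar R)%E by rewrite lee1n.
have h10 : (fun w => Y1 w - Y0 w) \in Lfun P 2%:E.
  by have := rpredB h1 h0; move=> /(_ p12).
have h2 := L2_mulb mW W1 h10.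
have h3 : (fun w => Y0 w + W w * (Y1 w - Y0 w)) \in Lfun P 2%:E.
  by have := rpredD h0 h2; move=> /(_ p12).
have -> : obsY W Y0 Y1 = (fun w => Y0 w + W w * (Y1 w - Y0 w)).
  by apply: funext => w; exact: obsY_eq.
by [].
Qed.
Arguments obsY_L2 {d T R} P {W Y0 Y1}.


Lemma int_pre {d} {T : measurableType d} {R : realType} (P : probability T R)
  (X f : T -> R) (B : set R) :
  (\int[P]_(w in X @^-1` B) (f w)%:E = \int[P]_w (f w * \1_B (X w))%:E)%E.
Proof.
rewrite (integral_mkcond _ (fun w => (f w)%:E)).
apply: eq_integral => w _; rewrite /patch indicE.
have -> : (w \in X @^-1` B) = (X w \in B) by apply/idP/idP; rewrite !inE.
by case: (X w \in B); rewrite ?mulr1 ?mulr0.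
Qed.

Lemma cond_of_ind {d} {T : measurableType d} {R : realType} (P : probability T R)
  (X Z : T -> R) (m : R -> R) :
  measurable_fun setT m -> P.-integrable setT (EFin \o Z) ->
  P.-integrable setT (EFin \o (m \o X)) ->
  (forall B, measurable B ->
    (\int[P]_w (Z w * \1_B (X w))%:E = \int[P]_w (m (X w) * \1_B (X w))%:E)%E) ->
  cond_exp_fun P X Z m.
Proof.
move=> mm Zi mi H; split => //; split => //; split => // B mB.
by rewrite !int_pre; exact: H.
Qed.
Arguments cond_of_ind {d T R P X Z m}.


Definition Z0 {d} {T : measurableType d} {R : realType} (P : probability T R)
  (f : T -> R) := P.-integrable setT (EFin \o f) /\ (\int[P]_w (f w)%:E = 0)%E.

Lemma Z0_of_PO {d} {T : measurableType d} {R : realType} (P : probability T R)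
  (X Z : T -> R) (m h : R -> R) : PO P X Z m h ->
  Z0 P (fun w => Z w * h (X w) - m (X w) * h (X w)).
Proof.
move=> [i1 [i2 E]]; split; first exact: integB.
rewrite intB // E subee //; exact: (integrable_fin_num measurableT i2).
Qed.
Arguments Z0_of_PO {d T R P X Z m h}.


Lemma Z0_add {d} {T : measurableType d} {R : realType} (P : probability T R)
  (f g : T -> R) : Z0 P f -> Z0 P g -> Z0 P (fun w => f w + g w).
Proof.
move=> [fi fe] [gi ge]; split; first exact: integD.
by rewrite intD // fe ge adde0.
Qed.
Arguments Z0_add {d T R P f g}.


Lemma Z0_sub {d} {T : measurableType d} {R : realType} (P : probability T R)
  (f g : T -> R) : Z0 P f -> Z0 P g -> Z0 P (fun w => f w - g w).
Proof.
move=> [fi fe] [gi ge]; split; first exact: integB.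
by rewrite intB // fe ge sube0.
Qed.
Arguments Z0_sub {d T R P f g}.


Lemma Z0_ext {d} {T : measurableType d} {R : realType} (P : probability T R)
  (f g : T -> R) : (forall w, f w = g w) -> Z0 P f -> Z0 P g.
Proof.
move=> e [fi fe]; split.
  by apply: (eq_integrable measurableT) fi => w _ /=; rewrite e.
by rewrite -fe; apply: eq_integral => w _; rewrite e.
Qed.
Arguments Z0_ext {d T R P f g}.


Lemma eq_of_Z0 {d} {T : measurableType d} {R : realType} (P : probability T R)
  (f g : T -> R) : P.-integrable setT (EFin \o f) -> P.-integrable setT (EFin \o g) ->
  Z0 P (fun w => f w - g w) -> (\int[P]_w (f w)%:E = \int[P]_w (g w)%:E)%E.
Proof.
move=> fi gi [_ e]; move: e; rewrite intB //.
move: (integrable_fin_num measurableT fi) (integrable_fin_num measurableT gi).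
move=> ff gf e.
by rewrite -[LHS](subeK _ gf) e add0e.
Qed.
Arguments eq_of_Z0 {d T R P f g}.


Lemma PO_L2 {d} {T : measurableType d} {R : realType} (P : probability T R)
  (X Z : T -> R) (m q : R -> R) (B : set R) :
  cond_exp_fun P X Z m -> measurable_fun setT X -> Z \in Lfun P 2%:E ->
  measurable_fun setT q -> (fun w => q (X w)) \in Lfun P 2%:E -> measurable B ->
  PO P X Z m (fun x => q x * \1_B x).
Proof.
move=> Hc mX HZ mq Hq mB.
have HmX := cond_L2 Hc mX HZ.
have mZ := Lfun_meas HZ; have mmX := Lfun_meas HmX.
have mh : measurable_fun setT (fun x => q x * \1_B x).
  by apply: measurable_funM => //; exact: measurable_indic.
have bnd (u : R) x : `|u * (q x * \1_B x)| <= `|u * q x|.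
  rewrite mulrA normrM ler_piMr // indicE.
  by case: (_ \in _); rewrite ?normr1 ?normr0.
apply: PO_gen => //.
- apply: (int_le _ _ (L2_int HZ Hq)); last by move=> w; exact: bnd.
  by apply: measurable_funM; [exact: mZ| exact: (measurableT_comp mh mX)].
- apply: (int_le _ _ (L2_int HmX Hq)); last by move=> w; exact: bnd.
  by apply: measurable_funM; [exact: mmX| exact: (measurableT_comp mh mX)].
Qed.
Arguments PO_L2 {d T R P X Z m q B}.


Lemma int_ind {d} {T : measurableType d} {R : realType} (P : probability T R)
  (X f : T -> R) (B : set R) : P.-integrable setT (EFin \o f) ->
  measurable_fun setT X -> measurable B ->
  P.-integrable setT (EFin \o (fun w => f w * \1_B (X w))).
Proof.
move=> fi mX mB; apply: (int_le _ _ fi).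
  apply: measurable_funM; first exact: int_meas fi.
  exact: (measurableT_comp (measurable_indic mB) mX).
move=> w; rewrite normrM ler_piMr // indicE.
by case: (_ \in _); rewrite ?normr1 ?normr0.
Qed.
Arguments int_ind {d T R P X f B}.


Lemma unit_general {d} {T : measurableType d} {R : realType} (P : probability T R)
  (X W Y0 Y1 : T -> R) (mu0 mu1 p C : R -> R) :
  X \in Lfun P 2%:E -> Y0 \in Lfun P 2%:E -> Y1 \in Lfun P 2%:E ->
  measurable_fun setT W -> (forall w, W w = 0 \/ W w = 1) ->
  cond_exp_fun P X Y0 mu0 -> cond_exp_fun P X Y1 mu1 -> cond_exp_fun P X W p ->
  cond_exp_fun P X (fun w => ((Y1 w - mu1 (X w)) - (Y0 w - mu0 (X w)))
               * (W w - p (X w))) C ->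
  cond_exp_fun P X (obsY W Y0 Y1) (fun x => mu0 x + p x * (mu1 x - mu0 x) + C x).
Proof.
move=> HX H0 H1 mW W01 c0 c1 cp cC.
have mX := Lfun_meas HX.
have HW := W_L2 P mW W01.
have L0 := cond_L2 c0 mX H0; have L1 := cond_L2 c1 mX H1.
have Lp := cond_L2 cp mX HW.
have p12 : (1 <= 2%:E :> \bar R)%E by rewrite lee1n.
have Ld : (fun w => mu1 (X w) - mu0 (X w)) \in Lfun P 2%:E.
  by have := rpredB L1 L0; move=> /(_ p12).
have [mm0 [_ [i0 _]]] := c0; have [mm1 _] := c1.
have [mp _] := cp; have [mC [_ [iC _]]] := cC.
have md : measurable_fun setT (fun x => mu1 x - mu0 x) by exact: measurable_funB.
have HY := obsY_L2 P mW W01 H0 H1.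
have iY := (Lfun1_integrable _ _).1 (L2_L1 HY).
have im : P.-integrable setT (EFin \o (fun w => mu0 (X w) + p (X w) * (mu1 (X w) - mu0 (X w)) + C (X w))).
  by apply: integD; [apply: integD => //; exact: (L2_int Lp Ld)|].
apply: cond_of_ind => //.
  by apply: measurable_funD => //; apply: measurable_funD => //; exact: measurable_funM.
move=> B mB.
have T1 := Z0_of_PO (PO_ind c0 mX mB).
have T2 := Z0_of_PO (PO_ind cC mX mB).
have T3 := Z0_of_PO (PO_L2 c1 mX H1 mp Lp mB).
have T4 := Z0_of_PO (PO_L2 c0 mX H0 mp Lp mB).
have T5 := Z0_of_PO (PO_L2 cp mX HW md Ld mB).
have S := Z0_add (Z0_add (Z0_add T1 T2) (Z0_sub T3 T4)) T5.
apply: eq_of_Z0; [exact: int_ind|exact: int_ind|].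
apply: (Z0_ext _ S) => w /=; rewrite obsY_eq //.
ring.
Qed.

Lemma ind_ge {R : realType} (c x : R) : ((c <= x)%R)%:R = \1_(`[c, +oo[%classic) x :> R.
Proof.
rewrite indicE; have -> // : (x \in `[c, +oo[%classic) = (c <= x).
apply/idP/idP.
  by move/set_mem; rewrite /= in_itv /= andbT.
by move=> cx; apply/mem_set; rewrite /= in_itv /= cx.
Qed.

Lemma ind_I {R : realType} (c x : R) (B : set R) :
  ((c <= x)%R)%:R * \1_B x = \1_(B `&` `[c, +oo[%classic) x :> R.
Proof.
rewrite ind_ge !indicE; case: (boolP (x \in B)) => xB;
  case: (boolP (x \in `[c, +oo[%classic)) => xc /=.
- by rewrite mem_set ?mulr1 ?mul1r //; split; exact/set_mem.
- rewrite memNset ?mulr0 ?mul0r //; move=> [_ h]; move/negP: xc; apply; exact/mem_set.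
- rewrite memNset ?mulr0 ?mul0r //; move=> [h _]; move/negP: xB; apply; exact/mem_set.
- rewrite memNset ?mulr0 ?mul0r //; move=> [h _]; move/negP: xB; apply; exact/mem_set.
Qed.

Lemma unit_sharp {d} {T : measurableType d} {R : realType} (P : probability T R)
  (X W Y0 Y1 : T -> R) (c : R) (mu0 mu1 : R -> R) :
  X \in Lfun P 2%:E -> Y0 \in Lfun P 2%:E -> Y1 \in Lfun P 2%:E ->
  measurable_fun setT W -> (forall w, W w = 0 \/ W w = 1) ->
  (forall w, W w = ((c <= X w)%R)%:R) ->
  cond_exp_fun P X Y0 mu0 -> cond_exp_fun P X Y1 mu1 ->
  cond_exp_fun P X (obsY W Y0 Y1) (fun x => mu0 x + ((c <= x)%R)%:R * (mu1 x - mu0 x)).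
Proof.
move=> HX H0 H1 mW W01 Wc c0 c1.
have mX := Lfun_meas HX.
have [mm0 [_ [i0 _]]] := c0; have [mm1 [_ [i1 _]]] := c1.
have md : measurable_fun setT (fun x => mu1 x - mu0 x) by exact: measurable_funB.
have mI : measurable_fun setT (fun x : R => ((c <= x)%R)%:R : R).
  have := @measurable_indic _ R R setT _ (measurable_itv `[c, +oo[).
  by apply: eq_measurable_fun => x _; rewrite ind_ge.
have HY := obsY_L2 P mW W01 H0 H1.
have iY := (Lfun1_integrable _ _).1 (L2_L1 HY).
have iD : P.-integrable setT (EFin \o (fun w => mu1 (X w) - mu0 (X w))) by exact: integB.
have iID : P.-integrable setT (EFin \o (fun w => ((c <= X w)%R)%:R * (mu1 (X w) - mu0 (X w)))).
  apply: (int_le _ _ iD).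
    apply: measurable_funM; first exact: (measurableT_comp mI mX).
    exact: int_meas iD.
  move=> w; rewrite normrM ler_piMl //.
  by case: (c <= X w); rewrite ?normr1 ?normr0.
have im : P.-integrable setT (EFin \o (fun w => mu0 (X w) + ((c <= X w)%R)%:R * (mu1 (X w) - mu0 (X w)))).
  exact: integD.
apply: cond_of_ind => //.
  by apply: measurable_funD => //; exact: measurable_funM.
move=> B mB.
have mB' : measurable (B `&` `[c, +oo[%classic).
  by apply: measurableI => //; exact: measurable_itv.
have T1 := Z0_of_PO (PO_ind c0 mX mB).
have T3 := Z0_of_PO (PO_ind c1 mX mB').
have T4 := Z0_of_PO (PO_ind c0 mX mB').
have S := Z0_add T1 (Z0_sub T3 T4).
apply: eq_of_Z0; [exact: int_ind|exact: int_ind|].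
apply: (Z0_ext _ S) => w /=; rewrite obsY_eq // Wc -!ind_I.
ring.
Qed.

Theorem theorem1 (R : realType) (d : measure_display) (T : measurableType d)
  (P : probability T R) (n : nat)
  (X W Y0 Y1 : 'I_n -> T -> R) (c : R)
  (mu0 mu1 p C : R -> R) :
  (* observations: random variables, square integrable, independent units *)
  (forall i, X i \in Lfun P 2%:E) ->
  (forall i, Y0 i \in Lfun P 2%:E) ->
  (forall i, Y1 i \in Lfun P 2%:E) ->
  (forall i, measurable_fun setT (W i)) ->
  (forall i w, W i w = 0 \/ W i w = 1) ->
  indep_units P X W Y0 Y1 ->
  (* definitions of mu_0, mu_1, p and C as conditional expectations *)
  (forall i, cond_exp_fun P (X i) (Y0 i) mu0) ->
  (forall i, cond_exp_fun P (X i) (Y1 i) mu1) ->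
  (forall i, cond_exp_fun P (X i) (W i) p) ->
  (forall i, cond_exp_fun P (X i)
     (fun w => ((Y1 i w - mu1 (X i w)) - (Y0 i w - mu0 (X i w)))
               * (W i w - p (X i w))) C) ->
  (* (A1) *)
  continuous mu0 -> continuous mu1 ->
  (* (A2) *)
  (forall x, x != c -> {for x, continuous p}) ->
  (exists pl pr : R, p x @[x --> c^'+] --> pr /\ p x @[x --> c^'-] --> pl /\
                     pr = p c /\ pr != pl) ->
  (* (A3) *)
  (forall x, x != c -> {for x, continuous C}) ->
  (exists Cl Cr : R, C x @[x --> c^'+] --> Cr /\ C x @[x --> c^'-] --> Cl /\
                     Cr = C c) ->
  let tau_c := mu1 c - mu0 c in
  (exists (beta : R) (f : R -> R), continuous f /\
     exists eps : 'I_n -> T -> R, forall i,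
       (forall w, obsY (W i) (Y0 i) (Y1 i) w =
          tau_c * p (X i w) + beta * (c <= X i w)%R%:R + f (X i w) + eps i w) /\
       good_error P (X i) (eps i)) /\
  ((forall i w, W i w = (c <= X i w)%R%:R) ->
   exists f : R -> R, continuous f /\
     exists eps : 'I_n -> T -> R, forall i,
       (forall w, obsY (W i) (Y0 i) (Y1 i) w =
          tau_c * (c <= X i w)%R%:R + 0 * (c <= X i w)%R%:R + f (X i w) + eps i w) /\
       good_error P (X i) (eps i)).
Proof.
move=> HX HY0 HY1 mW W01 _ c0 c1 cp cC cm0 cm1 cpc [pl [pr [pR [pL [epr _]]]]]
  cCc [Cl [Cr [CR [CL eCr]]]] tau_c.
split.
- exists (C c - Cl).
  exists (fun x => mu0 x + p x * ((mu1 x - mu0 x) - (mu1 c - mu0 c)) +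
                   (C x - (C c - Cl) * ((c <= x)%R)%:R)).
  split; first exact: (@cont_gen R mu0 mu1 p C c pl pr Cl Cr cm0 cm1 cpc pR pL epr cCc CR CL eCr).
  exists (fun i w => obsY (W i) (Y0 i) (Y1 i) w -
     (mu0 (X i w) + p (X i w) * (mu1 (X i w) - mu0 (X i w)) + C (X i w))).
  move=> i; split.
    by move=> w; rewrite /tau_c; ring.
  apply: (@cond_good _ _ _ P (X i) (obsY (W i) (Y0 i) (Y1 i))
    (fun x => mu0 x + p x * (mu1 x - mu0 x) + C x) _ (HX i)
    (obsY_L2 P (mW i) (W01 i) (HY0 i) (HY1 i))).
  exact: unit_general.
- move=> Wc.
  exists (fun x => mu0 x + ((c <= x)%R)%:R * ((mu1 x - mu0 x) - (mu1 c - mu0 c)) +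
                   ((fun _ => 0) x - (0 - 0) * ((c <= x)%R)%:R)).
  split.
    apply: (@cont_gen R mu0 mu1 (fun x => ((c <= x)%R)%:R) (fun _ => 0) c 0 1 0 0) => //.
    + by move=> x xc; exact: ind_cont.
    + apply: cvg_near_cst; near=> y.
      have yc : c < y by near: y; exact: nbhs_right_gt.
      by rewrite ltW.
    + apply: cvg_near_cst; near=> y.
      have yc : y < c by near: y; exact: nbhs_left_lt.
      by rewrite lt_geF.
    + by rewrite lexx.
    + by move=> x _; exact: cvg_cst.
    + exact: cvg_cst.
    + exact: cvg_cst.
  exists (fun i w => obsY (W i) (Y0 i) (Y1 i) w -
     (mu0 (X i w) + ((c <= X i w)%R)%:R * (mu1 (X i w) - mu0 (X i w)))).
  move=> i; split.
    by move=> w; rewrite /tau_c; ring.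
  apply: (@cond_good _ _ _ P (X i) (obsY (W i) (Y0 i) (Y1 i))
    (fun x => mu0 x + ((c <= x)%R)%:R * (mu1 x - mu0 x)) _ (HX i)
    (obsY_L2 P (mW i) (W01 i) (HY0 i) (HY1 i))).
  exact: (@unit_sharp _ _ _ P (X i) (W i) (Y0 i) (Y1 i) c mu0 mu1 (HX i) (HY0 i) (HY1 i) (mW i) (W01 i) (Wc i) (c0 i) (c1 i)).
Unshelve. all: by end_near. Qed.
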